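(* Let $(r_n),(R_n)$ be real sequences and $(C_n),(D_n),(d_n)$ complex sequences with $\sum_n(|C_n|^2+|d_nD_n|^2)<\infty$. Assume $r_n\to\chi$ for some $\chi<0$, and that there are $n'\in\mathbb{N}$, $\mu>0$, $\nu>1/2$ with $|R_n|\le\mu n^{-\nu}(|C_n|^2+|d_nD_n|^2)^{1/2}$ for all $n\ge n'$. Then for every $\varepsilon\in(0,1)$ and $T>0$ there exists $n_0=n_0(\varepsilon)\in\mathbb{N}$, independent of $T$ and of the coefficients, such that $$\int_0^\infty k(t)\Big|\sum_{n=n_0}^\infty R_ne^{r_nt}\Big|^2dt\le\varepsilon\,\pi T\sum_{n=n_0}^\infty\frac{|C_n|^2+|d_nD_n|^2}{\pi^2+T^2r_n^2}.$$
   Context: For $T>0$, $k(t):=\sin(\pi t/T)$ for $t\in[0,T]$ and $k(t):=0$ otherwise. *)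

(* Defs.v *)
From Stdlib Require Export Reals.
Open Scope R_scope.

(* Complex numbers modelled as pairs (re, im) of reals. *)
Definition Cx := (R * R)%type.
Definition Cmul (z w : Cx) : Cx :=
  (fst z * fst w - snd z * snd w, fst z * snd w + snd z * fst w).
Definition Cmod2 (z : Cx) : R := fst z ^ 2 + snd z ^ 2.

Definition kern (T t : R) : R :=
  if Rle_dec 0 t then (if Rle_dec t T then sin (PI * t / T) else 0) else 0.

Definition acoef (C D d : nat -> Cx) (n : nat) : R :=
  Cmod2 (C n) + Cmod2 (Cmul (d n) (D n)).

(* Main.v *)
Require Import Defs.
From Stdlib Require Import Reals Lra Lia Psatz.
From Coquelicot Require Import Coquelicot.
Open Scope R_scope.

Lemma abs_bnd (a b : R) : Rabs a <= b -> - b <= a <= b.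
Proof. intros H. pose proof (Rle_abs a). pose proof (Rle_abs (-a)). rewrite Rabs_Ropp in H1. lra. Qed.

Lemma exp_le (x y : R) : x <= y -> exp x <= exp y.
Proof. intros [H|H]. left; apply exp_increasing; auto. subst; lra. Qed.

Lemma ln_le' (x y : R) : 0 < x -> x <= y -> ln x <= ln y.
Proof. intros H [H1|H1]. left; apply ln_increasing; auto. subst; lra. Qed.

Lemma cv_le_const (u : nat -> R) (l c : R) :
  Un_cv u l -> (forall n, u n <= c) -> l <= c.
Proof.
  intros Hu Hb. destruct (Rle_dec l c) as [H|H]; [exact H|].
  exfalso. destruct (Hu (l - c)) as [N HN]; [lra|].
  specialize (HN N (le_n N)). specialize (Hb N). unfold R_dist in HN.
  apply Rabs_def2 in HN. lra.
Qed.

Lemma cv_abs_le (u : nat -> R) (l c : R) :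
  Un_cv u l -> (forall n, Rabs (u n) <= c) -> Rabs l <= c.
Proof.
  intros Hu Hb. unfold Rabs at 1. destruct (Rcase_abs l).
  - assert (Un_cv (fun n => - u n) (- l)).
    { intros e He. destruct (Hu e He) as [N HN]. exists N. intros n Hn.
      unfold R_dist. replace (- u n - - l) with (-(u n - l)) by ring.
      rewrite Rabs_Ropp. apply HN; auto. }
    apply (cv_le_const _ _ _ H). intros n. specialize (Hb n).
    apply abs_bnd in Hb. lra.
  - apply (cv_le_const _ _ _ Hu). intros n. specialize (Hb n).
    apply abs_bnd in Hb. lra.
Qed.

Lemma term_le_sum (f : nat -> R) (n : nat) :
  (forall k, 0 <= f k) -> f n <= sum_f_R0 f n.
Proof.
  intros Hf. destruct n; simpl. lra.
  pose proof (cond_pos_sum f n Hf). lra.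
Qed.

Lemma shift_sum_le (f : nat -> R) (n0 N : nat) :
  (forall k, 0 <= f k) ->
  sum_f_R0 (fun k => f (n0 + k)%nat) N <= sum_f_R0 f (n0 + N).
Proof.
  intros Hf. induction N.
  - simpl. apply term_le_sum; auto.
  - simpl. rewrite Nat.add_succ_r. simpl. lra.
Qed.

Lemma summable_nonneg (u : nat -> R) (Mb : R) :
  (forall n, 0 <= u n) -> (forall N, sum_f_R0 u N <= Mb) ->
  {l : R | Un_cv (sum_f_R0 u) l}.
Proof.
  intros Hu Hb. apply growing_cv.
  - intros n. simpl. specialize (Hu (S n)). lra.
  - exists Mb. intros x [i ->]. apply Hb.
Qed.

Lemma sum_le (f g : nat -> R) N : (forall k, f k <= g k) -> sum_f_R0 f N <= sum_f_R0 g N.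
Proof. intros H; induction N; simpl; [apply H|]. specialize (H (S N)). lra. Qed.

Lemma sum_abs_le (f : nat -> R) N : Rabs (sum_f_R0 f N) <= sum_f_R0 (fun k => Rabs (f k)) N.
Proof. induction N; simpl. lra. eapply Rle_trans. apply Rabs_triang. lra. Qed.

Lemma lam_bound (s X Y : R) : 0 <= s -> 0 < X -> 0 <= Y ->
  (forall l, 0 < l -> s <= (l * X + Y / l) / 2) -> s ^ 2 <= X * Y.
Proof.
  intros Hs HX HY H. destruct (Req_dec s 0) as [->|Hs0].
  - nra.
  - assert (Hl : 0 < s / X) by (apply Rdiv_lt_0_compat; lra).
    specialize (H _ Hl).
    replace (s / X * X) with s in H by (field; lra).
    replace (Y / (s / X)) with (X * Y / s) in H by (field; lra).
    assert (s <= X * Y / s) by lra.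
    apply (Rmult_le_compat_l s) in H0; [|lra].
    replace (s * (X * Y / s)) with (X*Y) in H0 by (field; lra). nra.
Qed.

Lemma pstep (q x : R) : 1 < q -> 1 < x ->
  Rpower x (- q) <= (Rpower (x - 1) (1 - q) - Rpower x (1 - q)) / (q - 1).
Proof.
  intros Hq Hx.
  destruct (MVT_cor2 (fun y => Rpower y (1 - q)) (fun y => (1 - q) * Rpower y (1 - q - 1)) (x - 1) x)
    as [c [Hc1 Hc2]]; [lra| |].
  { intros c Hc. apply derivable_pt_lim_power. lra. }
  replace (1 - q - 1) with (- q) in Hc1 by ring.
  assert (Rpower c (-q) >= Rpower x (-q)).
  { rewrite !Rpower_Ropp. apply Rle_ge. apply Rinv_le_contravar.
    - unfold Rpower; apply exp_pos.
    - left. apply Rlt_Rpower_l; lra. }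
  apply (Rmult_le_reg_l (q - 1)); [lra|].
  replace ((q - 1) * ((Rpower (x - 1) (1 - q) - Rpower x (1 - q)) / (q - 1)))
    with (-(Rpower x (1 - q) - Rpower (x - 1) (1 - q))) by (field; lra).
  rewrite Hc1. replace (x - (x-1)) with 1 by ring. nra.
Qed.

Lemma ptail (q : R) (n0 : nat) : 1 < q -> (2 <= n0)%nat -> forall M,
  sum_f_R0 (fun k => Rpower (INR (n0 + k)) (- q)) M <= Rpower (INR n0 - 1) (1 - q) / (q - 1).
Proof.
  intros Hq Hn M.
  assert (Hn' : 2 <= INR n0) by (replace 2 with (INR 2) by (simpl; ring); apply le_INR; auto).
  assert (forall M, sum_f_R0 (fun k => Rpower (INR (n0 + k)) (- q)) M <=
     (Rpower (INR n0 - 1) (1 - q) - Rpower (INR (n0 + M)) (1 - q)) / (q - 1)).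
  { induction M0.
    - simpl. rewrite Nat.add_0_r. apply pstep; lra.
    - simpl. eapply Rle_trans. apply Rplus_le_compat. apply IHM0.
      apply (pstep q (INR (n0 + S M0))). lra.
      rewrite plus_INR. rewrite S_INR. pose proof (pos_INR M0). lra.
      replace (INR (n0 + S M0) - 1) with (INR (n0 + M0)).
      right. field. lra.
      rewrite Nat.add_succ_r, S_INR. ring. }
  eapply Rle_trans. apply H.
  unfold Rdiv. apply Rmult_le_compat_r. left; apply Rinv_0_lt_compat; lra.
  assert (0 < Rpower (INR (n0 + M)) (1 - q)) by (unfold Rpower; apply exp_pos). lra.
Qed.

Lemma rpow_small (q eta : R) : 1 < q -> 0 < eta -> exists N : nat, forall n : nat, (N <= n)%nat ->
  Rpower (INR n - 1) (1 - q) <= eta.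
Proof.
  intros Hq He.
  destruct (INR_archimed 1 (exp (ln eta / (1 - q)) + 1)) as [N HN]; [lra|].
  exists N. intros n Hn. apply le_INR in Hn.
  assert (Hy : exp (ln eta / (1 - q)) <= INR n - 1) by lra.
  assert (Hy0 : 0 < INR n - 1) by (pose proof (exp_pos (ln eta / (1-q))); lra).
  unfold Rpower. rewrite <- (exp_ln eta) by lra.
  apply exp_le. 
  apply ln_le' in Hy; [|apply exp_pos]. rewrite ln_exp in Hy.
  apply (Rmult_le_compat_l (q - 1)) in Hy; [|lra].
  replace ((q - 1) * (ln eta / (1 - q))) with (- ln eta) in Hy by (field; lra). nra.
Qed.

Lemma int_sin_exp (T c K : R) : 0 < T -> c < 0 ->
  forall pr : Riemann_integrable (fun t => K * (sin (PI*t/T) * exp (c*t))) 0 T,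
  RiemannInt pr = K * ((PI/T) * (exp (c*T) + 1) / (c^2 + (PI/T)^2)).
Proof.
  intros HT Hc pr. rewrite <- RInt_Reals.
  set (k := PI / T).
  assert (Hk : 0 < k) by (unfold k; apply Rdiv_lt_0_compat; [apply PI_RGT_0|lra]).
  assert (Hd : 0 < c^2 + k^2) by nra.
  set (F := fun t => K * (exp (c*t) * (c * sin (PI*t/T) - k * cos (PI*t/T)) / (c^2 + k^2))).
  assert (HI : is_RInt (fun t => K * (sin (PI*t/T) * exp (c*t))) 0 T (minus (F T) (F 0))).
  { apply (@is_RInt_derive R_CompleteNormedModule F).
    - intros x _. unfold F. auto_derive; [auto|].
      unfold k. unfold k, Rdiv in Hd. unfold Rdiv. field. split; [lra|]. pose proof PI_RGT_0. nra.
    - intros x _. apply continuity_pt_filterlim.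
      apply continuity_pt_mult. apply continuity_pt_const. intros a b; auto.
      apply continuity_pt_mult.
      apply (continuity_pt_comp (fun t => PI*t/T) sin). 
      apply continuity_pt_div. apply continuity_pt_mult. apply continuity_pt_const. intros a b; auto.
      apply derivable_continuous_pt, derivable_pt_id. apply continuity_pt_const. intros a b; auto. lra.
      apply continuity_sin.
      apply (continuity_pt_comp (fun t => c*t) exp).
      apply continuity_pt_mult. apply continuity_pt_const. intros a b; auto.
      apply derivable_continuous_pt, derivable_pt_id. apply derivable_continuous, derivable_exp. }
  rewrite (is_RInt_unique _ _ _ _ HI). unfold minus, plus, opp; simpl. unfold F.
  replace (PI * T / T) with PI by (field; lra).
  replace (PI * 0 / T) with 0 by (field; lra).
  rewrite sin_PI, cos_PI, sin_0, cos_0, Rmult_0_r, exp_0. field. lra.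
Qed.

Lemma sum_lin (f g : nat -> R) (al be : R) N :
  sum_f_R0 (fun k => al * f k + be * g k) N = al * sum_f_R0 f N + be * sum_f_R0 g N.
Proof. induction N; simpl. ring. rewrite IHN. ring. Qed.

Lemma sum_scal_r (f : nat -> R) (c : R) N :
  sum_f_R0 (fun k => f k * c) N = sum_f_R0 f N * c.
Proof. induction N; simpl. ring. rewrite IHN. ring. Qed.

Theorem lemma5p8 :
  forall (r : nat -> R) (chi mu nu : R) (n' : nat),
    chi < 0 -> Un_cv r chi -> 0 < mu -> / 2 < nu ->
    forall eps : R, 0 < eps < 1 ->
    exists n0 : nat,
      forall T : R, 0 < T ->
      forall (Rc : nat -> R) (C D d : nat -> Cx),
        (exists L : R, infinite_sum (acoef C D d) L) ->
        (forall n : nat, (n' <= n)%nat -> (0 < n)%nat ->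
           Rabs (Rc n) <= mu * Rpower (INR n) (- nu) * sqrt (acoef C D d n)) ->
        exists (S : R -> R) (B : R),
          (forall t : R, 0 <= t <= T ->
             infinite_sum (fun m => Rc (n0 + m)%nat * exp (r (n0 + m)%nat * t)) (S t)) /\
          infinite_sum (fun m => acoef C D d (n0 + m)%nat
                                 / (PI ^ 2 + T ^ 2 * (r (n0 + m)%nat) ^ 2)) B /\
          exists pr : Riemann_integrable (fun t => kern T t * (S t) ^ 2) 0 T,
            RiemannInt pr <= eps * PI * T * B.
Proof.
  intros r chi mu nu n' Hchi Hr Hmu Hnu eps Heps.
  set (q := 2 * nu). assert (Hq : 1 < q) by (unfold q; lra).
  destruct (Hr (- chi / 2)) as [Nr HNr]; [lra|].
  assert (Hdel : 0 < 2 * eps / (9 * mu ^ 2) * (q - 1)).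
  { apply Rmult_lt_0_compat; [|lra]. apply Rdiv_lt_0_compat; [lra|]. nra. }
  destruct (rpow_small q _ Hq Hdel) as [Np HNp].
  set (n0 := Nat.max (Nat.max Nr n') (Nat.max 2 Np)).
  exists n0. intros T HT Rc C D d [L HL] Hbd.
  assert (Hrr : forall k, 3 * chi / 2 < r (n0 + k)%nat < chi / 2).
  { intros k. assert (Hk : (n0 + k >= Nr)%nat) by (unfold n0; lia).
    specialize (HNr _ Hk). unfold R_dist in HNr. apply Rabs_def2 in HNr. lra. }
  set (Z := Rpower (INR n0 - 1) (1 - q) / (q - 1)).
  assert (HZpos : 0 < Z).
  { unfold Z. apply Rdiv_lt_0_compat; [unfold Rpower; apply exp_pos|lra]. }
  assert (HZ : mu ^ 2 * Z <= 2 * eps / 9).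
  { assert (Hp := HNp n0 ltac:(unfold n0; lia)).
    assert (Z <= 2 * eps / (9 * mu ^ 2)).
    { unfold Z. apply (Rmult_le_reg_r (q - 1)); [lra|].
      replace (Rpower (INR n0 - 1) (1 - q) / (q - 1) * (q - 1)) with (Rpower (INR n0 - 1) (1 - q)) by (field; lra).
      exact Hp. }
    apply (Rmult_le_compat_l (mu ^ 2)) in H; [|nra].
    replace (mu ^ 2 * (2 * eps / (9 * mu ^ 2))) with (2 * eps / 9) in H by (field; lra). exact H. }
  assert (HZs : forall M, sum_f_R0 (fun k => Rpower (INR (n0 + k)) (- q)) M <= Z).
  { intros M. apply ptail; [exact Hq| unfold n0; lia]. }
  set (a := acoef C D d).
  assert (Ha : forall n, 0 <= a n).
  { intros n. unfold a, acoef, Cmod2. pose proof (pow2_ge_0 (fst (C n))).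
    pose proof (pow2_ge_0 (snd (C n))). pose proof (pow2_ge_0 (fst (Cmul (d n) (D n)))).
    pose proof (pow2_ge_0 (snd (Cmul (d n) (D n)))). lra. }
  assert (HaL : forall N, sum_f_R0 (fun k => a (n0 + k)%nat) N <= L).
  { intros N. eapply Rle_trans. apply shift_sum_le; exact Ha. apply sum_incr; [exact HL|exact Ha]. }
  assert (Hpp : forall k, Rpower (INR (n0 + k)) (- nu) ^ 2 = Rpower (INR (n0 + k)) (- q)).
  { intros k. simpl. rewrite Rmult_1_r, <- Rpower_plus. f_equal. unfold q; ring. }
  assert (Hrc : forall k, Rabs (Rc (n0 + k)%nat) <=
            mu * Rpower (INR (n0 + k)) (- nu) * sqrt (a (n0 + k)%nat)).
  { intros k. apply Hbd; unfold n0; lia. }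
  assert (Hsq : forall k, sqrt (a (n0 + k)%nat) ^ 2 = a (n0 + k)%nat).
  { intros k. simpl. rewrite Rmult_1_r. apply sqrt_sqrt, Ha. }
  assert (Hrc2 : forall k, Rabs (Rc (n0 + k)%nat) <=
            (mu ^ 2 / 2) * Rpower (INR (n0 + k)) (- q) + (1/2) * a (n0 + k)%nat).
  { intros k. eapply Rle_trans. apply Hrc. rewrite <- Hpp.
    set (u := Rpower (INR (n0 + k)) (- nu)). set (s := sqrt (a (n0 + k)%nat)).
    assert (Ea : a (n0 + k)%nat = s ^ 2) by (unfold s; rewrite Hsq; auto). rewrite Ea.
    pose proof (pow2_ge_0 (mu * u - s)). nra. }
  set (M := - (3 / 2) * chi).
  set (fn := fun m t => Rc (n0 + m)%nat * exp (r (n0 + m)%nat * t)).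
  assert (Hcvn : CVN_R fn).
  { intros rho. exists (fun k => Rabs (Rc (n0 + k)%nat) * exp (M * rho)).
    destruct (summable_nonneg (fun k => Rabs (Rabs (Rc (n0 + k)%nat) * exp (M * rho)))
                ((mu ^ 2 * Z + L) / 2 * exp (M * rho))) as [l Hl].
    - intros n. apply Rabs_pos.
    - intros N.
      assert (Heq : sum_f_R0 (fun k => Rabs (Rabs (Rc (n0 + k)%nat) * exp (M * rho))) N =
                    sum_f_R0 (fun k => Rabs (Rc (n0 + k)%nat)) N * exp (M * rho)).
      { rewrite <- sum_scal_r. apply sum_eq. intros i _.
        rewrite Rabs_mult, Rabs_Rabsolu, (Rabs_pos_eq (exp _)); [reflexivity|left; apply exp_pos]. }
      rewrite Heq. apply Rmult_le_compat_r; [left; apply exp_pos|].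
      eapply Rle_trans. apply sum_le. apply Hrc2. rewrite sum_lin.
      pose proof (HZs N). pose proof (HaL N). nra.
    - exists l. split; [exact Hl|]. intros n y Hy. unfold Boule in Hy.
      rewrite Rminus_0_r in Hy. unfold fn.
      rewrite Rabs_mult, (Rabs_pos_eq (exp _)) by (left; apply exp_pos).
      apply Rmult_le_compat_l; [apply Rabs_pos|]. apply exp_le.
      pose proof (Hrr n). pose proof (Rle_abs (r (n0 + n)%nat * y)).
      rewrite Rabs_mult in H0. rewrite (Rabs_left (r _)) in H0 by lra.
      assert (0 <= Rabs y) by apply Rabs_pos.
      pose proof (cond_pos rho). unfold M. nra. }
  set (cv := CVN_R_CVS fn Hcvn).
  set (S := SFL fn cv).
  assert (HS : forall t, Un_cv (fun N => SP fn N t) (S t)).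
  { intros t. unfold S, SFL. destruct (cv t) as [x Hx]. exact Hx. }
  assert (HSc : continuity S).
  { apply SFL_continuity; [exact Hcvn|]. intros n. unfold fn. reg. }
  set (b := fun k => a (n0 + k)%nat / (PI ^ 2 + T ^ 2 * r (n0 + k)%nat ^ 2)).
  assert (HPI := PI_RGT_0).
  assert (Hw : forall k, PI ^ 2 <= PI ^ 2 + T ^ 2 * r (n0 + k)%nat ^ 2).
  { intros k. pose proof (pow2_ge_0 T). pose proof (pow2_ge_0 (r (n0 + k)%nat)). nra. }
  assert (Hb0 : forall k, 0 <= b k).
  { intros k. unfold b. apply Rmult_le_pos; [apply Ha|]. left; apply Rinv_0_lt_compat.
    specialize (Hw k). nra. }
  destruct (summable_nonneg b (L / PI ^ 2)) as [B HB]; [exact Hb0| |].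
  { intros N. eapply Rle_trans. apply (sum_le _ (fun k => a (n0 + k)%nat * / PI ^ 2)).
    - intros k. unfold b. apply Rmult_le_compat_l; [apply Ha|].
      apply Rinv_le_contravar; [nra|apply Hw].
    - rewrite sum_scal_r. apply Rmult_le_compat_r; [left; apply Rinv_0_lt_compat; nra|apply HaL]. }
  assert (HBs : forall N, sum_f_R0 b N <= B) by (intros N; apply sum_incr; [exact HB|exact Hb0]).
  assert (HB0 : 0 <= B) by (pose proof (HBs 0%nat); pose proof (Hb0 0%nat); simpl in *; lra).
  exists S, B. split; [intros t _; exact (HS t)|]. split; [exact HB|].
  set (K0 := fun t => (PI ^ 2 + T ^ 2 * (9 / 4 * chi ^ 2)) * exp (chi * t)).
  assert (HK0 : forall t, 0 < K0 t).
  { intros t. unfold K0. apply Rmult_lt_0_compat; [|apply exp_pos].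
    pose proof (pow2_ge_0 T). pose proof (pow2_ge_0 chi). nra. }
  assert (Hpt : forall t, 0 <= t -> S t ^ 2 <= (mu ^ 2 * Z * K0 t) * B).
  { intros t Ht. rewrite <- pow2_abs. apply lam_bound; [apply Rabs_pos| |exact HB0|].
    { apply Rmult_lt_0_compat; [|apply HK0]. apply Rmult_lt_0_compat; [nra|exact HZpos]. }
    intros l Hl. apply (cv_abs_le _ _ _ (HS t)). intros N. unfold SP.
    eapply Rle_trans. apply sum_abs_le.
    eapply Rle_trans. apply (sum_le _ (fun k => (l * mu ^ 2 * K0 t / 2) * Rpower (INR (n0 + k)) (- q)
                                            + (/ (2 * l)) * b k)).
    2:{ rewrite sum_lin. pose proof (HZs N). pose proof (HBs N).
        assert (0 <= l * mu ^ 2 * K0 t / 2).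
        { pose proof (HK0 t). apply Rmult_le_pos; [|lra]. apply Rmult_le_pos; nra. }
        assert (0 < / (2 * l)) by (apply Rinv_0_lt_compat; lra).
        apply Rle_trans with ((l * mu ^ 2 * K0 t / 2) * Z + / (2 * l) * B).
        - apply Rplus_le_compat; apply Rmult_le_compat_l; lra.
        - right. field. lra. }
    intros k. unfold fn.
    rewrite Rabs_mult, (Rabs_pos_eq (exp _)) by (left; apply exp_pos).
    set (p' := Rpower (INR (n0 + k)) (- nu)).
    set (s := sqrt (a (n0 + k)%nat)).
    set (w := PI ^ 2 + T ^ 2 * r (n0 + k)%nat ^ 2).
    set (P := mu * p' * exp (r (n0 + k)%nat * t)).
    assert (Hw0 : 0 < w) by (unfold w; specialize (Hw k); nra).
    assert (Hp'0 : 0 < p') by (unfold p', Rpower; apply exp_pos).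
    assert (HP0 : 0 <= P) by (unfold P; pose proof (exp_pos (r (n0 + k)%nat * t)); apply Rmult_le_pos; nra).
    assert (H1 : Rabs (Rc (n0 + k)%nat) * exp (r (n0 + k)%nat * t) <= P * s).
    { unfold P. pose proof (Hrc k) as Hk. fold p' s in Hk.
      apply (Rmult_le_compat_r (exp (r (n0 + k)%nat * t))) in Hk; [|left; apply exp_pos].
      nra. }
    assert (H2 : P * s <= l * (P ^ 2 * w) / 2 + s ^ 2 / (2 * l * w)).
    { assert (E : l * (P ^ 2 * w) / 2 + s ^ 2 / (2 * l * w) - P * s = (l * P * w - s) ^ 2 / (2 * l * w))
        by (field; lra).
      assert (0 <= (l * P * w - s) ^ 2 / (2 * l * w)).
      { apply Rmult_le_pos; [apply pow2_ge_0|]. left; apply Rinv_0_lt_compat; nra. }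
      lra. }
    assert (H3 : P ^ 2 * w <= mu ^ 2 * Rpower (INR (n0 + k)) (- q) * K0 t).
    { rewrite <- Hpp. fold p'. unfold P, K0.
      assert (Ee : exp (r (n0 + k)%nat * t) ^ 2 = exp (2 * r (n0 + k)%nat * t)).
      { simpl. rewrite Rmult_1_r, <- exp_plus. f_equal. ring. }
      assert (Hex : exp (2 * r (n0 + k)%nat * t) <= exp (chi * t)).
      { apply exp_le. pose proof (Hrr k). nra. }
      assert (Hww : w <= PI ^ 2 + T ^ 2 * (9 / 4 * chi ^ 2)).
      { unfold w. pose proof (Hrr k). pose proof (pow2_ge_0 T).
        assert (r (n0 + k)%nat ^ 2 <= 9 / 4 * chi ^ 2) by nra. nra. }
      replace ((mu * p' * exp (r (n0 + k)%nat * t)) ^ 2 * w)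
        with ((mu ^ 2 * p' ^ 2) * (exp (r (n0 + k)%nat * t) ^ 2 * w)) by ring.
      replace (mu ^ 2 * p' ^ 2 * ((PI ^ 2 + T ^ 2 * (9 / 4 * chi ^ 2)) * exp (chi * t)))
        with ((mu ^ 2 * p' ^ 2) * (exp (chi * t) * (PI ^ 2 + T ^ 2 * (9 / 4 * chi ^ 2)))) by ring.
      apply Rmult_le_compat_l; [nra|]. rewrite Ee.
      apply Rmult_le_compat; [left; apply exp_pos|lra|exact Hex|exact Hww]. }
    assert (H4 : s ^ 2 / (2 * l * w) = / (2 * l) * b k).
    { unfold s. rewrite (Hsq k). unfold b. fold w. field. lra. }
    rewrite <- H4.
    assert (l * (P ^ 2 * w) / 2 <= l * mu ^ 2 * K0 t / 2 * Rpower (INR (n0 + k)) (- q)).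
    { apply (Rmult_le_compat_l (l / 2)) in H3; [|lra]. 
      replace (l * (P ^ 2 * w) / 2) with (l / 2 * (P ^ 2 * w)) by field.
      replace (l * mu ^ 2 * K0 t / 2 * Rpower (INR (n0 + k)) (- q))
        with (l / 2 * (mu ^ 2 * Rpower (INR (n0 + k)) (- q) * K0 t)) by field. exact H3. }
    lra. }
  assert (Hsinc : continuity_pt (fun t => sin (PI * t / T)) 0 -> True) by auto.
  assert (Hsc : forall x, continuity_pt (fun t => sin (PI * t / T)) x).
  { intros x. apply (continuity_pt_comp (fun t => PI*t/T) sin).
    apply continuity_pt_div. apply continuity_pt_mult. apply continuity_pt_const. intros u v; auto.
    apply derivable_continuous_pt, derivable_pt_id. apply continuity_pt_const. intros u v; auto. lra.
    apply continuity_sin. }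
  set (h := fun t => sin (PI * t / T) * (S t * S t)).
  assert (Hh : Riemann_integrable h 0 T).
  { apply continuity_implies_RiemannInt; [lra|]. intros x _. unfold h.
    apply continuity_pt_mult; [apply Hsc|]. apply continuity_pt_mult; apply HSc. }
  assert (pr : Riemann_integrable (fun t => kern T t * S t ^ 2) 0 T).
  { apply (Riemann_integrable_ext h); [|exact Hh]. intros x Hx.
    rewrite Rmin_left in Hx by lra; rewrite Rmax_right in Hx by lra.
    unfold h, kern. destruct (Rle_dec 0 x); [|lra]. destruct (Rle_dec x T); [|lra]. ring. }
  exists pr.
  set (Kc := mu ^ 2 * Z * B * (PI ^ 2 + T ^ 2 * (9 / 4 * chi ^ 2))).
  assert (Hg : Riemann_integrable (fun t => Kc * (sin (PI * t / T) * exp (chi * t))) 0 T).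
  { apply continuity_implies_RiemannInt; [lra|]. intros x _.
    apply continuity_pt_mult. apply continuity_pt_const. intros u v; auto.
    apply continuity_pt_mult; [apply Hsc|].
    apply (continuity_pt_comp (fun t => chi*t) exp).
    apply continuity_pt_mult. apply continuity_pt_const. intros u v; auto.
    apply derivable_continuous_pt, derivable_pt_id. apply derivable_continuous, derivable_exp. }
  eapply Rle_trans. apply (RiemannInt_P19 pr Hg). lra.
  { intros x Hx. unfold kern. destruct (Rle_dec 0 x); [|lra]. destruct (Rle_dec x T); [|lra].
    assert (Hs0 : 0 <= sin (PI * x / T)).
    { apply sin_ge_0.
      - apply Rmult_le_pos; [apply Rmult_le_pos; lra|]. left; apply Rinv_0_lt_compat; lra.
      - apply (Rmult_le_reg_r T); [lra|]. replace (PI * x / T * T) with (PI * x) by (field; lra). nra. }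
    pose proof (Hpt x ltac:(lra)) as Hx2.
    replace (Kc * (sin (PI * x / T) * exp (chi * x))) with (sin (PI * x / T) * ((mu ^ 2 * Z * K0 x) * B))
      by (unfold Kc, K0; ring).
    apply Rmult_le_compat_l; auto. }
  rewrite int_sin_exp by lra.
  set (E := exp (chi * T)).
  assert (HE : 0 < E <= 1).
  { split. apply exp_pos. rewrite <- exp_0. apply exp_le. nra. }
  assert (Hden : 0 < chi ^ 2 * T ^ 2 + PI ^ 2) by (pose proof (pow2_ge_0 (chi * T)); nra).
  set (Q := (PI ^ 2 + 9 / 4 * chi ^ 2 * T ^ 2) / (chi ^ 2 * T ^ 2 + PI ^ 2)).
  assert (HQ : 0 <= Q <= 9 / 4).
  { unfold Q. split.
    - apply Rmult_le_pos. pose proof (pow2_ge_0 (chi * T)); nra. left; apply Rinv_0_lt_compat; lra.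
    - apply (Rmult_le_reg_r (chi ^ 2 * T ^ 2 + PI ^ 2)); [lra|].
      replace ((PI ^ 2 + 9 / 4 * chi ^ 2 * T ^ 2) / (chi ^ 2 * T ^ 2 + PI ^ 2) * (chi ^ 2 * T ^ 2 + PI ^ 2))
        with (PI ^ 2 + 9 / 4 * chi ^ 2 * T ^ 2) by (field; lra). nra. }
  replace (Kc * (PI / T * (E + 1) / (chi ^ 2 + (PI / T) ^ 2)))
    with ((mu ^ 2 * Z) * ((E + 1) * Q) * (B * PI * T)).
  2:{ unfold Kc, Q. field. split; [lra|]. replace ((chi * T) ^ 2) with (chi ^ 2 * T ^ 2) by ring. lra. }
  replace (eps * PI * T * B) with (eps * (B * PI * T)) by ring.
  apply Rmult_le_compat_r. apply Rmult_le_pos; [|lra]. apply Rmult_le_pos; lra.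
  assert (0 <= (E + 1) * Q <= 9 / 2) by nra.
  assert (0 <= mu ^ 2 * Z) by nra.
  nra.
Qed.
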